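(* Let $P$ be a prismatoid. Then the top and the bottom of $P$ are Minkowski equivalent.
   Context: A $d$-dimensional prism is a polytope affinely equivalent to $Q \times [0,1]$ for some $(d-1)$-dimensional polytope $Q$; its top and bottom facets are the images of $Q\times\{1\}$ and $Q \times \{0\}$. A prismatoid is a polytope whose face lattice is isomorphic to that of a prism and such that the two facets corresponding to the top and bottom facets of the prism (called the top and bottom of the prismatoid) are parallel. Two faces $F,G$ are parallel if $\mathrm{lin}(F)=\mathrm{lin}(G)$, where $\mathrm{lin}(F)$ is the linear subspace parallel to the affine hull of $F$. Two polytopes are Minkowski equivalent if they have the same normal fan. *)

(* Defs.v *)
From mathcomp Require Import all_boot all_order all_algebra.
From mathcomp Require Import classical_sets reals.
Set Implicit Arguments. Unset Strict Implicit. Unset Printing Implicit Defensive.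
Import Order.TTheory GRing.Theory Num.Theory.
Local Open Scope ring_scope.
Local Open Scope classical_set_scope.

Section Polytopes.
Variable R : realType.

Definition dotv (n : nat) (u v : 'rV[R]_n) : R := \sum_(i < n) u 0 i * v 0 i.

Definition is_polytope (n : nat) (P : set 'rV[R]_n) : Prop :=
  exists (k : nat) (p : 'I_k -> 'rV[R]_n),
    P = [set x | exists lam : 'I_k -> R,
                   (forall i, 0 <= lam i) /\ \sum_(i < k) lam i = 1 /\
                   x = \sum_(i < k) lam i *: p i].

(* faces: the empty set, and the maximizer sets of linear functionals
   (c = 0 gives P itself) *)
Definition is_face (n : nat) (P F : set 'rV[R]_n) : Prop :=
  F = set0 \/
  exists c : 'rV[R]_n,
    F = [set x | P x /\ forall y, P y -> dotv c y <= dotv c x].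

Definition face_lattice_iso (n1 n2 : nat) (P1 : set 'rV[R]_n1)
    (P2 : set 'rV[R]_n2) (f : set 'rV[R]_n1 -> set 'rV[R]_n2) : Prop :=
  (forall F, is_face P1 F -> is_face P2 (f F)) /\
  (forall G, is_face P2 G -> exists2 F, is_face P1 F & f F = G) /\
  (forall F G, is_face P1 F -> is_face P1 G -> (F `<=` G <-> f F `<=` f G)).

Definition prism (m : nat) (Q : set 'rV[R]_m) : set 'rV[R]_(m + 1) :=
  [set z | Q (lsubmx z) /\ 0 <= rsubmx z 0 0 <= 1].
Definition prism_bottom (m : nat) (Q : set 'rV[R]_m) : set 'rV[R]_(m + 1) :=
  [set z | Q (lsubmx z) /\ rsubmx z 0 0 = 0].
Definition prism_top (m : nat) (Q : set 'rV[R]_m) : set 'rV[R]_(m + 1) :=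
  [set z | Q (lsubmx z) /\ rsubmx z 0 0 = 1].

(* lin(F): the linear subspace parallel to the affine hull of F, i.e. the set
   of affine dependencies  sum a_i x_i  with x_i in F and sum a_i = 0 *)
Definition lin (n : nat) (F : set 'rV[R]_n) : set 'rV[R]_n :=
  [set v | exists (k : nat) (x : 'I_k -> 'rV[R]_n) (a : 'I_k -> R),
     (forall i, F (x i)) /\ \sum_(i < k) a i = 0 /\
     v = \sum_(i < k) a i *: x i].

Definition parallel (n : nat) (F G : set 'rV[R]_n) : Prop := lin F = lin G.

Definition prismatoid_with (n : nat) (P B T : set 'rV[R]_n) : Prop :=
  is_polytope P /\
  (exists (m : nat) (Q : set 'rV[R]_m) (f : set 'rV[R]_(m + 1) -> set 'rV[R]_n),
     [/\ is_polytope Q, Q !=set0, face_lattice_iso (prism Q) P f,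
         f (prism_bottom Q) = B & f (prism_top Q) = T]) /\
  parallel B T.

Definition normal_cone (n : nat) (P F : set 'rV[R]_n) : set 'rV[R]_n :=
  [set c | forall x y, F x -> P y -> dotv c y <= dotv c x].

Definition normal_fan (n : nat) (P : set 'rV[R]_n) : set (set 'rV[R]_n) :=
  [set N | exists2 F, is_face P F /\ F !=set0 & N = normal_cone P F].

Definition minkowski_equivalent (n : nat) (P1 P2 : set 'rV[R]_n) : Prop :=
  normal_fan P1 = normal_fan P2.

End Polytopes.

(* Main.v *)
Require Import Defs.
From mathcomp Require Import all_boot all_order all_algebra.
From mathcomp Require Import boolp classical_sets reals.
From mathcomp Require Import ring.
Set Implicit Arguments. Unset Strict Implicit. Unset Printing Implicit Defensive.
Import Order.TTheory GRing.Theory Num.Theory.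
Local Open Scope ring_scope.
Local Open Scope classical_set_scope.

Section S.
Variable R : realType.

Definition amax n (P : set 'rV[R]_n) c :=
  [set x | P x /\ forall y, P y -> dotv c y <= dotv c x].

Lemma dotvDl n (c1 c2 v : 'rV[R]_n) : dotv (c1 + c2) v = dotv c1 v + dotv c2 v.
Proof. by rewrite /dotv -big_split; apply: eq_bigr => i _; rewrite mxE mulrDl. Qed.

Lemma dotvZl n a (c v : 'rV[R]_n) : dotv (a *: c) v = a * dotv c v.
Proof. by rewrite /dotv mulr_sumr; apply: eq_bigr => i _; rewrite mxE mulrA. Qed.

Lemma dotv0l n (v : 'rV[R]_n) : dotv 0 v = 0.
Proof. by rewrite /dotv big1 // => i _; rewrite mxE mul0r. Qed.

Lemma dotvB n (c v w : 'rV[R]_n) : dotv c (v - w) = dotv c v - dotv c w.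
Proof. by rewrite /dotv -sumrB; apply: eq_bigr => i _; rewrite !mxE mulrBr. Qed.

Lemma dotv_sum n k (c : 'rV[R]_n) (a : 'I_k -> R) (x : 'I_k -> 'rV[R]_n) :
  dotv c (\sum_(i < k) a i *: x i) = \sum_(i < k) a i * dotv c (x i).
Proof.
rewrite /dotv.
transitivity (\sum_(j < n) \sum_(i < k) c 0 j * (a i * x i 0 j)).
  by apply: eq_bigr => j _; rewrite summxE mulr_sumr; apply: eq_bigr => i _; rewrite mxE.
rewrite exchange_big; apply: eq_bigr => i _; rewrite mulr_sumr.
by apply: eq_bigr => j _; rewrite mulrCA.
Qed.

Lemma dotv_split m (d z : 'rV[R]_(m + 1)) :
  dotv d z = dotv (lsubmx d) (lsubmx z) + rsubmx d 0 0 * rsubmx z 0 0.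
Proof.
rewrite /dotv big_split_ord big_ord1 /=; congr (_ + _).
  by apply: eq_bigr => i _; rewrite !mxE.
by rewrite !mxE.
Qed.


Lemma eval_subr_ge0 n k (t : 'rV[R]_n) (p : 'I_k -> 'rV[R]_n) x :
  (forall i, dotv t (p i) <= dotv t x) -> forall i, 0 <= dotv t x - dotv t (p i).
Proof. by move=> h i; rewrite subr_ge0. Qed.

Lemma support n k (t : 'rV[R]_n) (p : 'I_k -> 'rV[R]_n) (mu : 'I_k -> R) x :
  (forall i, dotv t (p i) <= dotv t x) -> (forall i, 0 <= mu i) ->
  \sum_(i < k) mu i = 1 -> x = \sum_(i < k) mu i *: p i ->
  forall i, mu i != 0 -> dotv t (p i) = dotv t x.
Proof.
move=> hp hmu hs hx.
have E : \sum_(i < k) mu i * (dotv t x - dotv t (p i)) = 0.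
  rewrite (eq_bigr (fun i => mu i * dotv t x - mu i * dotv t (p i))); last first.
    by move=> i _; rewrite mulrBr.
  rewrite sumrB -mulr_suml hs mul1r -dotv_sum -hx subrr //.
have H := psumr_eq0P (fun j _ => mulr_ge0 (hmu j) (eval_subr_ge0 hp j)) E.
move=> i hi; have /eqP := H i isT; rewrite mulf_eq0 (negbTE hi) /= subr_eq0 => /eqP ->.
  by [].
Qed.

Lemma poly_pt n (P : set 'rV[R]_n) k (p : 'I_k -> 'rV[R]_n) :
  P = [set x | exists lam : 'I_k -> R,
                   (forall i, 0 <= lam i) /\ \sum_(i < k) lam i = 1 /\
                   x = \sum_(i < k) lam i *: p i] -> forall j, P (p j).
Proof.
move=> -> j; exists (fun i => (i == j)%:R); split; first by move=> i; rewrite ler0n.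
split.
  by rewrite (bigD1 j) //= eqxx big1 ?addr0 // => i /negbTE ->.
by rewrite (bigD1 j) //= eqxx scale1r big1 ?addr0 // => i /negbTE ->; rewrite scale0r.
Qed.

Lemma face_max n (P : set 'rV[R]_n) t x0 c : is_polytope P -> amax P t x0 ->
  exists y, amax P t y /\ forall x, amax P t x -> dotv c x <= dotv c y.
Proof.
move=> [k [p hP]] [Px0 hx0].
have pP := poly_pt hP.
have getmu : forall x, P x -> exists mu : 'I_k -> R, (forall i, 0 <= mu i) /\
   \sum_(i < k) mu i = 1 /\ x = \sum_(i < k) mu i *: p i.
  by move=> x; rewrite hP.
pose tau := dotv t x0.
have [mu0 [hmu0 [hs0 hx0e]]] := getmu _ Px0.
have sup0 := support (fun i => hx0 _ (pP i)) hmu0 hs0 hx0e.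
have [i0 hi0] : exists i0, mu0 i0 != 0.
  apply: contrapT => H; move: hs0; rewrite big1 => [/eqP|i _].
    by rewrite eq_sym oner_eq0.
  by apply: contrapT => H2; apply: H; exists i; apply/eqP.
pose S := [pred i | dotv t (p i) == tau].
have Si0 : S i0 by rewrite /S /= sup0.
pose j := [arg max_(i > i0 | S i) dotv c (p i)]%O.
have [j0 Sj0 jmax] : exists2 j0, S j0 & forall i, S i -> dotv c (p i) <= dotv c (p j0).
  case: (@Order.TotalTheory.arg_maxP _ R _ i0 S (fun i => dotv c (p i)) Si0) => j0 Sj Hj.
  by exists j0 => // i Si; apply: Hj.
exists (p j0); split.
  split; first exact: pP.
  by move=> y Py; rewrite (eqP Sj0); apply: hx0.
move=> x [Px hx].
have [mu [hmu [hs hxe]]] := getmu _ Px.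
have sup := support (fun i => hx _ (pP i)) hmu hs hxe.
have txtau : dotv t x = tau by apply/le_anti; rewrite hx0 // hx.
rewrite hxe dotv_sum -[dotv c (p j0)]mul1r -hs mulr_suml.
apply: ler_sum => i _.
have [->|nz] := eqVneq (mu i) 0; first by rewrite !mul0r.
apply: ler_wpM2l => //; apply: jmax; by rewrite /S /= sup // txtau.
Qed.


Lemma face_inter n (P F G : set 'rV[R]_n) :
  is_face P F -> is_face P G -> is_face P (F `&` G).
Proof.
move=> [->|[c1 ->]]; first by left; rewrite set0I.
move=> [->|[c2 ->]]; first by left; rewrite setI0.
have [[z [[Pz hz1] [_ hz2]]]|H] := pselect (exists z, (amax P c1 `&` amax P c2) z); last first.
  left; apply/seteqP; split => // x hx; apply: H; by exists x.
right; exists (c1 + c2); apply/seteqP; split => x /=.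
  move=> [[Px h1] [_ h2]]; split => // y Py; rewrite !dotvDl; exact: lerD (h1 _ Py) (h2 _ Py).
move=> [Px h]; have := h _ Pz; rewrite !dotvDl => hle.
have e1 : dotv c1 x = dotv c1 z.
  apply/le_anti; rewrite hz1 //=; rewrite -(lerD2r (dotv c2 x)).
  by apply: le_trans _ hle; rewrite lerD2l hz2.
have e2 : dotv c2 x = dotv c2 z.
  apply/le_anti; rewrite hz2 //=; rewrite -(lerD2l (dotv c1 x)).
  by apply: le_trans _ hle; rewrite lerD2r hz1.
split; split => // y Py; [rewrite e1; exact: hz1 | rewrite e2; exact: hz2].
Qed.

Section Lattice.
Variables (n1 n2 : nat) (P1 : set 'rV[R]_n1) (P2 : set 'rV[R]_n2)
  (f : set 'rV[R]_n1 -> set 'rV[R]_n2).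
Hypothesis iso : face_lattice_iso P1 P2 f.

Lemma f_set0 : f set0 = set0.
Proof.
case: iso => _ [sur mono].
have [F hF e] := sur set0 (or_introl erefl).
apply/seteqP; split => // x hx; rewrite -e.
by apply: (proj1 (mono _ _ (or_introl erefl) hF)) hx => y.
Qed.

Lemma f_inter X Y : is_face P1 X -> is_face P1 Y -> f (X `&` Y) = f X `&` f Y.
Proof.
move=> hX hY; case: iso => fc [sur mono].
have hXY := face_inter hX hY.
apply/seteqP; split.
  move=> z hz; split.
    by apply: (proj1 (mono _ _ hXY hX)) hz => y [].
  by apply: (proj1 (mono _ _ hXY hY)) hz => y [].
have [Z hZ e] := sur _ (face_inter (fc _ hX) (fc _ hY)).
rewrite -e; apply: (proj1 (mono _ _ hZ hXY)).
move=> z Zz; split.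
  by apply: (proj2 (mono _ _ hZ hX)) Zz; rewrite e => y [].
by apply: (proj2 (mono _ _ hZ hY)) Zz; rewrite e => y [].
Qed.

Lemma f_ne X : is_face P1 X -> (exists z, X z) -> exists w, f X w.
Proof.
move=> hX [z Xz]; apply: contrapT => H.
case: iso => _ [_ mono].
have : f X `<=` f set0 by rewrite f_set0 => w fw; apply: H; exists w.
by move/(proj2 (mono _ _ hX (or_introl erefl))) => /(_ z Xz).
Qed.

Lemma f_ne_inv X : is_face P1 X -> (exists w, f X w) -> exists z, X z.
Proof.
move=> hX [w fw]; apply: contrapT => H.
have E : X = set0 by apply/seteqP; split => // z Xz; apply: H; exists z.
by move: fw; rewrite E f_set0.
Qed.

End Lattice.


Section Prism.
Variables (m : nat) (Q : set 'rV[R]_m).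

Definition pt (q : 'rV[R]_m) (r : R) : 'rV[R]_(m + 1) := row_mx q (const_mx r).

Lemma pt_l q r : lsubmx (pt q r) = q. Proof. exact: row_mxKl. Qed.
Lemma pt_r q r : rsubmx (pt q r) 0 0 = r. Proof. by rewrite row_mxKr mxE. Qed.
Lemma ptK z : z = pt (lsubmx z) (rsubmx z 0 0).
Proof.
rewrite /pt -{1}(hsubmxK z); congr row_mx.
by apply/matrixP => i j; rewrite !mxE (ord1 i) (ord1 j).
Qed.
Lemma dotv_pt d q r : dotv d (pt q r) = dotv (lsubmx d) q + rsubmx d 0 0 * r.
Proof. by rewrite dotv_split pt_l pt_r. Qed.

Lemma prism_pt q r : prism Q (pt q r) <-> Q q /\ 0 <= r <= 1.
Proof. by rewrite /prism /= pt_l pt_r. Qed.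

Lemma bot_face : is_face (prism Q) (prism_bottom Q).
Proof.
right; exists (pt 0 (-1)); apply/seteqP; split => z /=.
  move=> [Qz rz]; split; first by split => //; rewrite rz lexx ler01.
  move=> y [_ /andP [hy _]]; rewrite (ptK z) (ptK y) !dotv_pt !pt_l !dotv0l !add0r !pt_r rz.
  by rewrite mulr0 mulN1r oppr_le0.
move=> [[Qz /andP [hz0 hz1]] H].
split => //; apply/le_anti; rewrite hz0 andbT.
have := H (pt (lsubmx z) 0); rewrite (ptK z) !dotv_pt !pt_l !pt_r dotv0l !add0r mulr0.
rewrite mulN1r oppr_ge0 => -> //; apply/prism_pt; split => //; by rewrite lexx ler01.
Qed.

Lemma top_face : is_face (prism Q) (prism_top Q).
Proof.
right; exists (pt 0 1); apply/seteqP; split => z /=.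
  move=> [Qz rz]; split; first by split => //; rewrite rz lexx ler01.
  move=> y [_ /andP [_ hy]]; rewrite (ptK z) (ptK y) !dotv_pt !pt_l !dotv0l !add0r !pt_r rz.
  by rewrite !mul1r.
move=> [[Qz /andP [hz0 hz1]] H].
split => //; apply/le_anti; rewrite hz1 /=.
have := H (pt (lsubmx z) 1); rewrite (ptK z) !dotv_pt !pt_l !pt_r dotv0l !add0r !mul1r.
move=> -> //; apply/prism_pt; split => //; by rewrite lexx ler01.
Qed.

Lemma prism_meets X z : is_face (prism Q) X -> X z ->
  (exists w, (X `&` prism_bottom Q) w) \/ (exists w, (X `&` prism_top Q) w).
Proof.
move=> [-> //|[d ->]] [[Qz /andP [h0 h1]] H].
have Pz : prism Q z by split => //; rewrite h0 h1.
have [d2 | d2] := leP 0 (rsubmx d 0 0).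
  right; exists (pt (lsubmx z) 1).
  have P1 : prism Q (pt (lsubmx z) 1) by apply/prism_pt; rewrite lexx ler01.
  split; last by rewrite /prism_top /= !pt_l !pt_r.
  split => // y Py; apply: le_trans (H _ Py) _.
  by rewrite (ptK z) !dotv_pt !pt_l lerD2l ler_wpM2l.
left; exists (pt (lsubmx z) 0).
have P0 : prism Q (pt (lsubmx z) 0) by apply/prism_pt; rewrite lexx ler01.
split; last by rewrite /prism_bottom /= !pt_l !pt_r.
split => // y Py; apply: le_trans (H _ Py) _.
by rewrite (ptK z) !dotv_pt !pt_l lerD2l mulr0 nmulr_rle0.
Qed.

Lemma prism_sym X : is_face (prism Q) X -> (exists w, (X `&` prism_bottom Q) w) ->
  (exists w, (X `&` prism_top Q) w) -> forall q, X (pt q 0) <-> X (pt q 1).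
Proof.
move=> [-> [w [] //]|[d ->]] [z0 [[Pz0 H0] [Qz0 r0]]] [z1 [[Pz1 H1] [Qz1 r1]]].
have d2 : rsubmx d 0 0 = 0.
  apply/le_anti/andP; split.
    have := H0 (pt (lsubmx z0) 1); rewrite !dotv_split !pt_l !pt_r r0 mulr1 mulr0.
    rewrite addr0 gerDl; apply; apply/prism_pt; by rewrite lexx ler01.
  have := H1 (pt (lsubmx z1) 0); rewrite !dotv_split !pt_l !pt_r r1 mulr1 mulr0.
  rewrite addr0 lerDl; apply; apply/prism_pt; by rewrite lexx ler01.
move=> q /=; rewrite !dotv_pt d2 !mul0r.
have e : prism Q (pt q 0) <-> prism Q (pt q 1).
  rewrite !prism_pt; split => -[Qq _]; by rewrite lexx ler01.
by split => -[/e h H].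
Qed.

Lemma prism_incl X0 X : is_face (prism Q) X0 -> is_face (prism Q) X ->
  (exists w, (X0 `&` prism_bottom Q) w) -> (exists w, (X0 `&` prism_top Q) w) ->
  (exists w, (X `&` prism_bottom Q) w) -> (exists w, (X `&` prism_top Q) w) ->
  (X0 `&` prism_top Q `<=` X `&` prism_top Q) <->
  (X0 `&` prism_bottom Q `<=` X `&` prism_bottom Q).
Proof.
move=> f0 f1 a0 b0 a1 b1; have s0 := prism_sym f0 a0 b0; have s1 := prism_sym f1 a1 b1.
split => H z [Xz [Qz rz]]; split => //; rewrite (ptK z) rz; rewrite (ptK z) rz in Xz.
  apply/s1; have := H (pt (lsubmx z) 1); rewrite /prism_top /= !pt_l !pt_r.
  by move=> /(_ (conj (proj1 (s0 _) Xz) (conj Qz erefl))) [].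
apply/s1; have := H (pt (lsubmx z) 0); rewrite /prism_bottom /= !pt_l !pt_r.
by move=> /(_ (conj (proj2 (s0 _) Xz) (conj Qz erefl))) [].
Qed.

End Prism.


Lemma nc_eq n (T : set 'rV[R]_n) c0 :
  normal_cone T (amax T c0) = [set c | amax T c0 `<=` amax T c].
Proof.
apply/seteqP; split => c /=.
  by move=> Hc x [Tx hx]; split => // y Ty; apply: Hc.
by move=> H x y Fx Ty; apply: (proj2 (H x Fx)).
Qed.

Lemma main n (P B T : set 'rV[R]_n) :
  prismatoid_with P B T -> minkowski_equivalent T B.
Proof.
move=> [hP [[m [Q [f [hQ [q Qq] iso hB hT]]]] par]].
have fcP := iso.1; have mono := iso.2.2.
have fB : is_face P B by rewrite -hB; apply: fcP; exact: bot_face.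
have fT : is_face P T by rewrite -hT; apply: fcP; exact: top_face.
have neTop : exists z, prism_top Q z by exists (pt q 1); rewrite /prism_top /= pt_l pt_r.
have neBot : exists z, prism_bottom Q z by exists (pt q 0); rewrite /prism_bottom /= pt_l pt_r.
have [yT0 TyT0] := f_ne iso (top_face Q) neTop; rewrite hT in TyT0.
have [yB0 ByB0] := f_ne iso (bot_face Q) neBot; rewrite hB in ByB0.
case: fT => [E|[t Et]]; first by rewrite E in TyT0.
case: fB => [E|[b Eb]]; first by rewrite E in ByB0.
have ET : T = amax P t := Et.
have EB : B = amax P b := Eb.
pose tau := dotv t yT0.
have TP : forall x, T x -> P x by move=> x; rewrite ET => -[].
have BP : forall x, B x -> P x by move=> x; rewrite EB => -[].
have tmax : forall y, P y -> dotv t y <= tau by move: TyT0; rewrite ET => -[].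
have tT : forall x, T x -> dotv t x = tau.
  move=> x Tx; have Px := TP _ Tx; apply/le_anti; rewrite tmax //=.
  by move: Tx; rewrite ET => -[_ H]; apply: H; apply: TP.
pose beta := dotv t yB0.
have tB : forall x, B x -> dotv t x = beta.
  move=> x Bx.
  have : lin B (x - yB0).
    exists 2, (fun i : 'I_2 => if i == ord0 then x else yB0),
      (fun i : 'I_2 => if i == ord0 then 1 else -1).
    split; first by move=> i; case: ifP.
    split; first by rewrite !big_ord_recl big_ord0 /= addr0 subrr.
    by rewrite !big_ord_recl big_ord0 /= scale1r scaleN1r addr0.
  rewrite par => -[k [xs [a [Txs [sa e]]]]].
  have := congr1 (dotv t) e; rewrite dotvB dotv_sum.
  rewrite (eq_bigr (fun i => a i * tau)); last by move=> i _; rewrite tT.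
  rewrite -mulr_suml sa mul0r.
  by move/eqP; rewrite subr_eq0 => /eqP.
have BT0 : forall x, B x -> T x -> False.
  move=> x Bx Tx.
  have : f (prism_bottom Q `&` prism_top Q) x.
    by rewrite (f_inter iso) ?hB ?hT //; [exact: bot_face | exact: top_face].
  have -> : prism_bottom Q `&` prism_top Q = set0.
    apply/seteqP; split => // z [[_ r0] [_ r1]]; move: r1; rewrite r0 => /eqP.
    by rewrite eq_sym oner_eq0.
  by rewrite (f_set0 iso).
have bt : beta < tau.
  rewrite lt_neqAle (tmax _ (BP _ ByB0)) andbT; apply/negP => /eqP e.
  apply: (BT0 yB0) => //; rewrite ET; split; first exact: BP.
  by move=> y Py; rewrite -/beta e; apply: tmax.
have ML : forall c, exists X, [/\ is_face (prism Q) X,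
    (exists w, (X `&` prism_bottom Q) w), (exists w, (X `&` prism_top Q) w),
    amax T c = f (X `&` prism_top Q) & amax B c = f (X `&` prism_bottom Q)].
  move=> c.
  have [yT [TyT hyT]] : exists y, amax P t y /\ forall x, amax P t x -> dotv c x <= dotv c y.
    have h0 : amax P t yT0 by rewrite -ET.
    exact: (face_max c hP h0).
  have [yB [ByB hyB]] : exists y, amax P b y /\ forall x, amax P b x -> dotv c x <= dotv c y.
    have h0 : amax P b yB0 by rewrite -EB.
    exact: (face_max c hP h0).
  rewrite -ET in TyT hyT; rewrite -EB in ByB hyB.
  pose lam := (dotv c yB - dotv c yT) / (tau - beta).
  pose g := c + lam *: t.
  have gT : forall x, T x -> dotv g x = dotv c x + lam * tau.
    by move=> x Tx; rewrite dotvDl dotvZl tT.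
  have gB : forall x, B x -> dotv g x = dotv c x + lam * beta.
    by move=> x Bx; rewrite dotvDl dotvZl tB.
  have eqv : dotv c yT + lam * tau = dotv c yB + lam * beta.
    have nz : tau - beta != 0 by rewrite subr_eq0 gt_eqF.
    have h := divfK nz (dotv c yB - dotv c yT).
    rewrite -/lam mulrBr in h.
    by rewrite -(subrK (lam * beta) (lam * tau)) h; ring.
  have [zs [[Pzs _] hzs]] : exists y, amax P 0 y /\ forall x, amax P 0 x -> dotv g x <= dotv g y.
    have h0 : amax P 0 yT by split; [exact: TP | move=> y _; rewrite !dotv0l].
    exact: (face_max g hP h0).
  have fF : is_face P (amax P g) by right; exists g.
  have [X fX eX] := iso.2.1 _ fF.
  have Fzs : amax P g zs.
    by split => // y Py; apply: hzs; split => // w _; rewrite !dotv0l.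
  have fXzs : f X zs by rewrite eX.
  have [x0 Xx0] := f_ne_inv iso fX (ex_intro _ zs fXzs).
  have hmax : forall y, P y -> dotv g y <= dotv g yT.
    case: (prism_meets fX Xx0) => -[w hw].
      have [u] := f_ne iso (face_inter fX (bot_face Q)) (ex_intro _ w hw).
      rewrite (f_inter iso) //; last exact: bot_face.
      rewrite eX hB => -[[Pu Hu] Bu] y Py; apply: le_trans (Hu _ Py) _.
      by rewrite gB // gT // eqv lerD2r hyB.
    have [u] := f_ne iso (face_inter fX (top_face Q)) (ex_intro _ w hw).
    rewrite (f_inter iso) //; last exact: top_face.
    rewrite eX hT => -[[Pu Hu] Tu] y Py; apply: le_trans (Hu _ Py) _.
    by rewrite gT // gT // lerD2r hyT.
  have FT : amax P g `&` T = amax T c.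
    apply/seteqP; split => x.
      move=> [[Px Hx] Tx]; split => // y Ty.
      by have := Hx y (TP _ Ty); rewrite !gT // lerD2r.
    move=> [Tx Hx]; split => //; split; first exact: TP.
    move=> y Py; apply: le_trans (hmax y Py) _; rewrite !gT // lerD2r; exact: Hx.
  have FB : amax P g `&` B = amax B c.
    apply/seteqP; split => x.
      move=> [[Px Hx] Bx]; split => // y By.
      by have := Hx y (BP _ By); rewrite !gB // lerD2r.
    move=> [Bx Hx]; split => //; split; first exact: BP.
    move=> y Py; apply: le_trans (hmax y Py) _; rewrite gT // eqv gB // lerD2r; exact: Hx.
  have eT : amax T c = f (X `&` prism_top Q).
    by rewrite (f_inter iso) //; [rewrite eX hT FT | exact: top_face].
  have eB : amax B c = f (X `&` prism_bottom Q).
    by rewrite (f_inter iso) //; [rewrite eX hB FB | exact: bot_face].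
  exists X; split => //.
    apply: (f_ne_inv iso (face_inter fX (bot_face Q))); exists yB; rewrite -eB.
    by split => // x Bx; apply: hyB.
  apply: (f_ne_inv iso (face_inter fX (top_face Q))); exists yT; rewrite -eT.
  by split => // x Tx; apply: hyT.
have key : forall c0 c, amax T c0 `<=` amax T c <-> amax B c0 `<=` amax B c.
  move=> c0 c.
  have [X0 [fX0 a0 b0 eT0 eB0]] := ML c0.
  have [X [fX a1 b1 eT eB]] := ML c.
  rewrite eT0 eT eB0 eB.
  rewrite -mono; try exact: face_inter fX0 (top_face Q); try exact: face_inter fX (top_face Q).
  rewrite -mono; try exact: face_inter fX0 (bot_face Q); try exact: face_inter fX (bot_face Q).
  exact: prism_incl fX0 fX a0 b0 a1 b1.
have neT : forall c, exists x, amax T c x.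
  move=> c; have [X [fX a1 b1 eT eB]] := ML c; rewrite eT.
  by have := f_ne iso (face_inter fX (top_face Q)) b1; apply.
have neB : forall c, exists x, amax B c x.
  move=> c; have [X [fX a1 b1 eT eB]] := ML c; rewrite eB.
  by have := f_ne iso (face_inter fX (bot_face Q)) a1; apply.
rewrite /minkowski_equivalent /normal_fan; apply/seteqP; split => N [F [fF neF] ->].
  case: fF => [E|[c0 E]]; first by move: neF; rewrite E => -[].
  rewrite E; exists (amax B c0); first by split; [right; exists c0 | exact: neB].
  rewrite !nc_eq; apply/seteqP; split => c /=; by rewrite key.
case: fF => [E|[c0 E]]; first by move: neF; rewrite E => -[].
rewrite E; exists (amax T c0); first by split; [right; exists c0 | exact: neT].
rewrite !nc_eq; apply/seteqP; split => c /=; by rewrite key.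
Qed.

End S.

Theorem lemma4p1 (R : realType) (n : nat) (P B T : set 'rV[R]_n) :
  prismatoid_with P B T -> minkowski_equivalent T B.
Proof. exact: main. Qed.
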